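(* Let $SC\subset[0,1]^2$ be the Sierpiński carpet. Then $S(SC)=\{(0,0)\}$. Consequently, $SC$ is not the achievement set $E(v_n)$ of any sequence $(v_n)$ in $\mathbb R^2$ with $\sum_n v_n$ absolutely convergent.
   Context: The Sierpiński carpet is the set of points $(s,t)\in[0,1]^2$ admitting ternary expansions $s=\sum_{i\ge1}a_i3^{-i}$, $t=\sum_{i\ge1}b_i3^{-i}$ ($a_i,b_i\in\{0,1,2\}$) with no index $i$ such that $a_i=b_i=1$; equivalently, it is obtained from $[0,1]^2$ by dividing into nine congruent subsquares, removing the open middle one, and iterating on the remaining squares. For an absolutely convergent series $\sum_n v_n$ in $\mathbb R^2$, $E(v_n)=\{\sum_{n=1}^\infty \varepsilon_n v_n : (\varepsilon_n)\in\{0,1\}^{\mathbb N}\}$. For $A\subset\mathbb R^2$, the spectre of $A$ is $S(A)=\{x\in \mathbb R^2:\ \forall y\in A,\ y+x\in A\text{ or }y-x\in A\}$. *)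

(* Defs.v *)
From Stdlib Require Import Reals.
Open Scope R_scope.

Definition pt := (R * R)%type.

Definition padd (p q : pt) : pt := (fst p + fst q, snd p + snd q).
Definition psub (p q : pt) : pt := (fst p - fst q, snd p - snd q).

Definition pnorm (p : pt) : R := sqrt (fst p ^ 2 + snd p ^ 2).

(* Sierpinski carpet: points (s,t) with ternary expansions
   s = sum_{i>=1} a_i 3^{-i}, t = sum_{i>=1} b_i 3^{-i}, digits in {0,1,2},
   and no index i with a_i = b_i = 1.  (Index shifted: digit a i has weight 3^{-(i+1)}.) *)
Definition sierpinski_carpet (p : pt) : Prop :=
  exists a b : nat -> nat,
    (forall i, (a i <= 2)%nat /\ (b i <= 2)%nat) /\
    (forall i, ~ (a i = 1%nat /\ b i = 1%nat)) /\
    infinite_sum (fun i => INR (a i) / 3 ^ (S i)) (fst p) /\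
    infinite_sum (fun i => INR (b i) / 3 ^ (S i)) (snd p).

Definition abs_convergent (v : nat -> pt) : Prop :=
  exists l : R, infinite_sum (fun n => pnorm (v n)) l.

Definition achievement_set (v : nat -> pt) (p : pt) : Prop :=
  exists eps : nat -> bool,
    infinite_sum (fun n => if eps n then fst (v n) else 0) (fst p) /\
    infinite_sum (fun n => if eps n then snd (v n) else 0) (snd p).

Definition spectre (A : pt -> Prop) (x : pt) : Prop :=
  forall y, A y -> A (padd y x) \/ A (psub y x).

(* Main.v *)
Require Import Defs.
From Stdlib Require Import Reals Lra Lia.
Open Scope R_scope.

Lemma cv_const (c : R) : Un_cv (fun _ => c) c.
Proof. intros eps He; exists 0%nat; intros; unfold Rdist; rewrite Rminus_diag, Rabs_R0; lra. Qed.

Lemma cv_affine (U V : nat -> R) l l' c e p q :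
  Un_cv V l -> (forall n, U (n + p)%nat = c * V (n + q)%nat + e) -> l' = c * l + e ->
  Un_cv U l'.
Proof.
  intros HV HUV -> eps Heps.
  assert (Hc : 0 < Rabs c + 1) by (pose proof (Rabs_pos c); lra).
  destruct (HV (eps / (Rabs c + 1))) as [N HN].
  { apply Rdiv_lt_0_compat; lra. }
  exists (N + p)%nat. intros n Hn.
  replace n with ((n - p) + p)%nat by lia. rewrite HUV. unfold Rdist.
  replace (c * V (n - p + q)%nat + e - (c * l + e)) with (c * (V (n-p+q)%nat - l)) by ring.
  rewrite Rabs_mult.
  specialize (HN (n - p + q)%nat ltac:(lia)). unfold Rdist in HN.
  set (d := Rabs (V (n - p + q)%nat - l)) in *.
  assert (0 <= d) by apply Rabs_pos.
  assert (Rabs c * d <= (Rabs c + 1) * d) by nra.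
  assert ((Rabs c + 1) * d < (Rabs c + 1) * (eps / (Rabs c + 1))) by (apply Rmult_lt_compat_l; lra).
  replace ((Rabs c + 1) * (eps / (Rabs c + 1))) with eps in * by (field; lra).
  lra.
Qed.

Lemma isum_ext f g l l' : infinite_sum f l -> (forall i, f i = g i) -> l' = l -> infinite_sum g l'.
Proof.
  intros H He ->. apply (cv_affine _ _ l l 1 0 0 0 H).
  - intros n. rewrite !Nat.add_0_r. rewrite Rmult_1_l, Rplus_0_r. apply sum_eq. intros; symmetry; auto.
  - ring.
Qed.

Definition Dg (a : nat -> nat) (s : R) := infinite_sum (fun i => INR (a i) / 3 ^ (S i)) s.

Lemma Dg_ext a b s s' : Dg a s -> (forall i, a i = b i) -> s' = s -> Dg b s'.
Proof. intros H He ->. apply (isum_ext _ _ s s H); auto. intros i; rewrite He; auto. Qed.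

Lemma p3 n : 0 < 3 ^ n.
Proof. apply pow_lt; lra. Qed.

Lemma Dg_shift a s : Dg a s -> Dg (fun i => a (S i)) (3 * s - INR (a 0%nat)).
Proof.
  intros H. unfold Dg.
  apply (cv_affine _ _ s _ 3 (- INR (a 0%nat)) 0 1 H); [|ring].
  intros n. rewrite Nat.add_0_r. induction n.
  - simpl. pose proof (p3 0). field.
  - rewrite Nat.add_succ_l. simpl sum_f_R0 in *. rewrite IHn.
    rewrite !Nat.add_1_r in *. simpl. pose proof (p3 n). field. lra.
Qed.

Lemma div_nonneg x y : 0 <= x -> 0 < y -> 0 <= x / y.
Proof. intros; unfold Rdiv; apply Rmult_le_pos; [auto|left; apply Rinv_0_lt_compat; auto]. Qed.
Definition pre (d : nat) (a : nat -> nat) : nat -> nat :=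
  fun i => match i with 0%nat => d | S j => a j end.

Lemma Dg_pre d a s : Dg a s -> Dg (pre d a) ((INR d + s) / 3).
Proof.
  intros H. unfold Dg.
  apply (cv_affine _ _ s _ (/3) (INR d / 3) 1 0 H); [|field].
  intros n. rewrite Nat.add_0_r, Nat.add_1_r. induction n.
  - simpl. field.
  - simpl sum_f_R0 in *. rewrite IHn. simpl. pose proof (p3 n). field. lra.
Qed.

Lemma cv_pow3 : Un_cv (fun n => (/3) ^ n) 0.
Proof.
  intros eps He. destruct (pow_lt_1_zero (/3)) with eps as [N HN]; auto.
  { rewrite Rabs_pos_eq; lra. }
  exists N. intros n Hn. unfold Rdist. rewrite Rminus_0_r. auto.
Qed.

Lemma Dg_const c : Dg (fun _ => c) (INR c / 2).
Proof.
  unfold Dg.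
  apply (cv_affine _ _ 0 _ (- (INR c / 2) / 3) (INR c / 2) 0 0 cv_pow3); [|ring].
  intros n. rewrite !Nat.add_0_r. induction n.
  - simpl. field.
  - simpl sum_f_R0 in *. rewrite IHn. simpl. rewrite !pow_inv.
    pose proof (p3 n). field. lra.
Qed.

Lemma psum_bounds a : (forall i, (a i <= 2)%nat) -> forall n,
  0 <= sum_f_R0 (fun i => INR (a i) / 3 ^ (S i)) n <= 1 - / 3 ^ (S n).
Proof.
  intros Ha n. induction n.
  - simpl. pose proof (le_INR _ _ (Ha 0%nat)). pose proof (pos_INR (a 0%nat)). simpl in *. split.
    + apply Rmult_le_pos; lra.
    + lra.
  - simpl sum_f_R0. pose proof (le_INR _ _ (Ha (S n))). pose proof (pos_INR (a (S n))).
    simpl in *. pose proof (p3 n).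
    assert (0 <= INR (a (S n)) / (3 * (3 * 3 ^ n))) by (apply div_nonneg; lra).
    assert (INR (a (S n)) / (3 * (3 * 3 ^ n)) <= 2 / (3 * (3 * 3 ^ n))).
    { unfold Rdiv. apply Rmult_le_compat_r; [|lra]. left; apply Rinv_0_lt_compat; lra. }
    assert (1 - / (3 * 3 ^ n) + 2 / (3 * (3 * 3 ^ n)) = 1 - / (3 * (3 * 3 ^ n))) by (field; lra).
    lra.
Qed.

Lemma Dg_ge0 a s : Dg a s -> 0 <= s.
Proof.
  intros H. apply (@Rle_cv_lim (fun _ => 0) (sum_f_R0 (fun i => INR (a i) / 3 ^ (S i))) 0 s); [|apply cv_const|exact H].
  intros n. apply cond_pos_sum. intros i. apply div_nonneg. apply pos_INR. apply p3.
Qed.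

Lemma Dg_le1 a s : (forall i, (a i <= 2)%nat) -> Dg a s -> s <= 1.
Proof.
  intros Ha H. apply (@Rle_cv_lim (sum_f_R0 (fun i => INR (a i) / 3 ^ (S i))) (fun _ => 1) s 1); [|exact H|apply cv_const].
  intros n. pose proof (psum_bounds a Ha n). pose proof (p3 (S n)).
  assert (0 < / 3 ^ S n) by (apply Rinv_0_lt_compat; lra). lra.
Qed.

Fixpoint shz (k : nat) (g : nat -> nat) : nat -> nat :=
  match k with 0%nat => g | S k' => pre 0 (shz k' g) end.

Lemma Dg_shz k g s : Dg g s -> Dg (shz k g) (s / 3 ^ k).
Proof.
  intros H. induction k.
  - simpl. apply (Dg_ext _ _ _ _ H); auto. field.
  - simpl. apply (Dg_ext _ _ _ _ (Dg_pre 0 _ _ IHk)); auto.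
    pose proof (p3 k). simpl. field. lra.
Qed.

Lemma Dg_zero k a s : (forall i, (a i <= 2)%nat) -> Dg a s -> 3 ^ k * s < 1 ->
  Dg (fun i => a (i + k)%nat) (3 ^ k * s).
Proof.
  revert a s. induction k; intros a s Ha H Hs.
  - apply (Dg_ext _ _ _ _ H). intros i; f_equal; lia. simpl; ring.
  - pose proof (Dg_ge0 _ _ H). pose proof (pow_R1_Rle 3 k ltac:(lra)).
    simpl in Hs.
    assert (H3 : 3 * s < 1) by nra.
    pose proof (Dg_shift _ _ H) as H'.
    pose proof (Dg_ge0 _ _ H') as H''.
    assert (E : a 0%nat = 0%nat).
    { destruct (a 0%nat) eqn:E; auto. rewrite S_INR in H''. pose proof (pos_INR n). lra. }
    rewrite E in H'. simpl INR in H'. rewrite Rminus_0_r in H'.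
    assert (Hb : forall i, (a (S i) <= 2)%nat) by auto.
    pose proof (IHk _ _ Hb H' ltac:(lra)) as HI.
    apply (Dg_ext _ _ _ _ HI). intros i; f_equal; lia. simpl; ring.
Qed.

Lemma Dg_mid a T : (forall i, (a i <= 2)%nat) -> Dg a T -> 1/3 < T < 2/3 -> a 0%nat = 1%nat.
Proof.
  intros Ha H HT. pose proof (Dg_shift _ _ H) as H'.
  pose proof (Dg_ge0 _ _ H'). pose proof (Dg_le1 (fun i => a (S i)) _ (fun i => Ha (S i)) H').
  destruct (a 0%nat) as [|[|m]].
  - simpl INR in *. lra.
  - reflexivity.
  - exfalso. assert (INR (S (S m)) >= 2) by (rewrite !S_INR; pose proof (pos_INR m); lra). lra.
Qed.

Lemma SC_hole k s t : sierpinski_carpet (s, t) -> 1/3 < 3 ^ k * s < 2/3 -> 1/3 < 3 ^ k * t < 2/3 -> False.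
Proof.
  intros [a [b [Hd [Hn [Ha Hb]]]]] Hs Ht. simpl in Ha, Hb.
  assert (Ha2 : forall i, (a i <= 2)%nat) by (intros i; apply Hd).
  assert (Hb2 : forall i, (b i <= 2)%nat) by (intros i; apply Hd).
  pose proof (Dg_zero k a s Ha2 Ha ltac:(lra)) as Za.
  pose proof (Dg_zero k b t Hb2 Hb ltac:(lra)) as Zb.
  pose proof (Dg_mid _ _ (fun i => Ha2 (i + k)%nat) Za Hs).
  pose proof (Dg_mid _ _ (fun i => Hb2 (i + k)%nat) Zb Ht).
  apply (Hn k). simpl in *. auto.
Qed.

Lemma SC_bounds p : sierpinski_carpet p -> 0 <= fst p <= 1 /\ 0 <= snd p <= 1.
Proof.
  intros [a [b [Hd [Hn [Ha Hb]]]]].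
  assert (Ha2 : forall i, (a i <= 2)%nat) by (intros i; apply Hd).
  assert (Hb2 : forall i, (b i <= 2)%nat) by (intros i; apply Hd).
  split; split.
  - exact (Dg_ge0 _ _ Ha).
  - exact (Dg_le1 _ _ Ha2 Ha).
  - exact (Dg_ge0 _ _ Hb).
  - exact (Dg_le1 _ _ Hb2 Hb).
Qed.

Lemma SC_swap s t : sierpinski_carpet (s, t) -> sierpinski_carpet (t, s).
Proof.
  intros [a [b [Hd [Hn [Ha Hb]]]]]. exists b, a. split; [|split; [|split]]; auto.
  - intros i; destruct (Hd i); auto.
  - intros i [H1 H2]; apply (Hn i); auto.
Qed.

Lemma SC_mk a b s t : (forall i, (a i <= 2)%nat /\ (b i <= 2)%nat) ->
  (forall i, ~ (a i = 1%nat /\ b i = 1%nat)) -> Dg a s -> Dg b t -> sierpinski_carpet (s, t).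
Proof. intros; exists a, b; auto. Qed.

Lemma shz_bound k g : (forall i, (g i <= 2)%nat) -> forall i, (shz k g i <= 2)%nat.
Proof. induction k; intros Hg i; simpl; auto. destruct i; simpl; auto. Qed.

Lemma shz_nc k g g' : (forall i, ~ (g i = 1%nat /\ g' i = 1%nat)) ->
  forall i, ~ (shz k g i = 1%nat /\ shz k g' i = 1%nat).
Proof. induction k; intros Hg i; simpl; auto. destruct i; simpl; [lia|auto]. Qed.

Lemma aux_k u : 0 < u -> forall N, (/3) ^ N < 6 * u -> u <= 1/2 -> exists k, 1/6 < 3 ^ k * u <= 1/2.
Proof.
  intros Hu N. induction N; intros HN Hu2.
  - exists 0%nat. simpl in *. lra.
  - destruct (Rlt_dec ((/3) ^ N) (6 * u)) as [Hl|Hl]; auto.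
    exists (S N).
    assert (AB : 3 ^ N * (/3) ^ N = 1).
    { rewrite <- Rpow_mult_distr, Rinv_r, pow1; lra. }
    pose proof (p3 N). simpl in *.
    assert (3 ^ N * (/ 3 * (/ 3) ^ N) < 3 ^ N * (6 * u)) by (apply Rmult_lt_compat_l; lra).
    assert (3 ^ N * (6 * u) <= 3 ^ N * ((/ 3) ^ N)) by (apply Rmult_le_compat_l; lra).
    split; nra.
Qed.

Lemma exists_k u : 0 < u -> u <= 1/2 -> exists k, 1/6 < 3 ^ k * u <= 1/2.
Proof.
  intros Hu Hu2. destruct (pow_lt_1_zero (/3)) with (6 * u) as [N HN].
  { rewrite Rabs_pos_eq; lra. } { lra. }
  specialize (HN N (le_n N)). rewrite Rabs_pos_eq in HN by (apply pow_le; lra).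
  eapply aux_k; eauto.
Qed.

Definition ones : nat -> nat := fun _ => 1%nat.
Definition zeros : nat -> nat := fun _ => 0%nat.

Lemma not_SC_neg s t : s < 0 -> ~ sierpinski_carpet (s, t).
Proof. intros H HS. apply SC_bounds in HS. simpl in HS. lra. Qed.
Lemma not_SC_gt1 s t : 1 < s -> ~ sierpinski_carpet (s, t).
Proof. intros H HS. apply SC_bounds in HS. simpl in HS. lra. Qed.

Lemma horiz u : 0 < u <= 1 ->
  exists y, sierpinski_carpet y /\ ~ sierpinski_carpet (fst y + u, snd y)
                               /\ ~ sierpinski_carpet (fst y - u, snd y).
Proof.
  intros Hu. destruct (Rlt_dec (1/2) u) as [Hl|Hl].
  - exists (INR 1 / 2, INR 0 / 2). simpl INR. split; [|split].
    + apply (SC_mk ones zeros).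
      * intros i; unfold ones, zeros; lia.
      * intros i; unfold ones, zeros; lia.
      * apply Dg_const.
      * apply Dg_const.
    + apply not_SC_gt1. simpl. lra.
    + apply not_SC_neg. simpl. lra.
  - destruct (exists_k u) as [k Hk]; try lra.
    pose proof (p3 k) as H3.
    set (bt := shz k (pre 1 (pre 2 zeros))).
    set (t := ((INR 1 + (INR 2 + INR 0 / 2) / 3) / 3) / 3 ^ k).
    assert (Dt : Dg bt t) by (apply Dg_shz, Dg_pre, Dg_pre, Dg_const).
    assert (Et : 3 ^ k * t = 5 / 9) by (unfold t; simpl INR; field; lra).
    destruct (Rle_dec (3 ^ k * u) (1/3)) as [Hz|Hz].
    + set (a := shz k (pre 0 ones)).
      set (s := ((INR 0 + INR 1 / 2) / 3) / 3 ^ k).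
      assert (Ds : Dg a s) by (apply Dg_shz, Dg_pre, Dg_const).
      assert (Es : 3 ^ k * s = 1 / 6) by (unfold s; simpl INR; field; lra).
      exists (s, t). simpl. split; [|split].
      * apply (SC_mk a bt); auto.
        -- intros i; split; [apply shz_bound|apply shz_bound];
           intros [|[|j]]; unfold ones, zeros; simpl; lia.
        -- apply shz_nc. intros [|[|j]]; unfold ones, zeros; simpl; lia.
      * intros HS. apply (SC_hole k _ _ HS); [|lra].
        rewrite Rmult_plus_distr_l. lra.
      * apply not_SC_neg. assert (3 ^ k * (s - u) < 0) by (rewrite Rmult_minus_distr_l; lra).
        nra.
    + set (a := shz k (pre 0 (pre 1 zeros))).
      set (s := ((INR 0 + (INR 1 + INR 0 / 2) / 3) / 3) / 3 ^ k).
      assert (Ds : Dg a s) by (apply Dg_shz, Dg_pre, Dg_pre, Dg_const).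
      assert (Es : 3 ^ k * s = 1 / 9) by (unfold s; simpl INR; field; lra).
      exists (s, t). simpl. split; [|split].
      * apply (SC_mk a bt); auto.
        -- intros i; split; [apply shz_bound|apply shz_bound];
           intros [|[|j]]; unfold ones, zeros; simpl; lia.
        -- apply shz_nc. intros [|[|j]]; unfold ones, zeros; simpl; lia.
      * intros HS. apply (SC_hole k _ _ HS); [|lra].
        rewrite Rmult_plus_distr_l. lra.
      * apply not_SC_neg. assert (3 ^ k * (s - u) < 0) by (rewrite Rmult_minus_distr_l; lra).
        nra.
Qed.

Lemma SC00 : sierpinski_carpet (0, 0).
Proof.
  apply (SC_mk zeros zeros); try (intros i; unfold zeros; lia).
  all: apply (Dg_ext _ _ _ _ (Dg_const 0)); auto; simpl; field.
Qed.

Lemma SC10 : sierpinski_carpet (1, 0).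
Proof.
  apply (SC_mk (fun _ => 2%nat) zeros); try (intros i; unfold zeros; lia).
  - apply (Dg_ext _ _ _ _ (Dg_const 2)); auto; simpl; field.
  - apply (Dg_ext _ _ _ _ (Dg_const 0)); auto; simpl; field.
Qed.

Lemma spectre_swap u w : spectre sierpinski_carpet (u, w) -> spectre sierpinski_carpet (w, u).
Proof.
  intros Hx [y1 y2] Hy. apply SC_swap in Hy. destruct (Hx _ Hy) as [H|H];
  [left|right]; unfold padd, psub in *; simpl in *; apply SC_swap; auto.
Qed.

Lemma spectre_h u : -1 <= u <= 1 -> spectre sierpinski_carpet (u, 0) -> u = 0.
Proof.
  intros Hb Hx. destruct (Rtotal_order u 0) as [Hl|[He|Hg]]; auto; exfalso.
  - destruct (horiz (-u)) as [[y1 y2] [Hy [H1 H2]]]; [lra|].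
    destruct (Hx _ Hy) as [H|H]; unfold padd, psub in H; simpl in *.
    + apply H2. replace (y1 - - u) with (y1 + u) by ring. rewrite Rplus_0_r in H. auto.
    + apply H1. replace (y1 + - u) with (y1 - u) by ring. rewrite Rminus_0_r in H. auto.
  - destruct (horiz u) as [[y1 y2] [Hy [H1 H2]]]; [lra|].
    destruct (Hx _ Hy) as [H|H]; unfold padd, psub in H; simpl in *.
    + apply H1. rewrite Rplus_0_r in H. auto.
    + apply H2. rewrite Rminus_0_r in H. auto.
Qed.

Lemma spectre_zero x : spectre sierpinski_carpet x -> x = (0, 0).
Proof.
  destruct x as [u w]. intros Hx.
  assert (A : (0 <= u <= 1 /\ 0 <= w <= 1) \/ (-1 <= u <= 0 /\ -1 <= w <= 0)).
  { destruct (Hx _ SC00) as [H|H]; apply SC_bounds in H; unfold padd, psub in H; simpl in H;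
    [left|right]; lra. }
  assert (B : (u <= 0 /\ 0 <= w) \/ (0 <= u /\ w <= 0)).
  { destruct (Hx _ SC10) as [H|H]; apply SC_bounds in H; unfold padd, psub in H; simpl in H;
    [left|right]; lra. }
  assert (C : u = 0 \/ w = 0) by (destruct A, B; lra).
  destruct C as [->| ->].
  - apply spectre_swap in Hx. rewrite (spectre_h w); auto. lra.
  - rewrite (spectre_h u); auto. lra.
Qed.

Lemma isum_flip f g n l l' : infinite_sum f l -> (forall m, m <> n -> g m = f m) ->
  l' = l + (g n - f n) -> infinite_sum g l'.
Proof.
  intros H Hgf ->. apply (cv_affine _ _ l _ 1 (g n - f n) n n H); [|ring].
  intros m. induction m.
  - simpl. destruct n as [|n'].
    + simpl. ring.
    + simpl. rewrite (sum_eq g f). ring. intros i Hi; apply Hgf; lia.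
  - simpl. rewrite IHm. rewrite (Hgf (S (m + n))) by lia. ring.
Qed.

Lemma ach_spectre v n : (forall p, achievement_set v p <-> sierpinski_carpet p) ->
  spectre sierpinski_carpet (v n).
Proof.
  intros Hv y Hy. apply Hv in Hy. destruct Hy as [eps [H1 H2]].
  set (eps' := fun m => if Nat.eq_dec m n then negb (eps n) else eps m).
  assert (Hne : forall m, m <> n -> eps' m = eps m).
  { intros m Hm; unfold eps'; destruct (Nat.eq_dec m n); congruence. }
  assert (Hn : eps' n = negb (eps n)) by (unfold eps'; destruct (Nat.eq_dec n n); congruence).
  destruct (eps n) eqn:E.
  - right. apply Hv. exists eps'. unfold psub; simpl. split.
    + apply (isum_flip _ _ n _ _ H1). intros m Hm; rewrite Hne; auto. rewrite Hn, E; simpl; ring.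
    + apply (isum_flip _ _ n _ _ H2). intros m Hm; rewrite Hne; auto. rewrite Hn, E; simpl; ring.
  - left. apply Hv. exists eps'. unfold padd; simpl. split.
    + apply (isum_flip _ _ n _ _ H1). intros m Hm; rewrite Hne; auto. rewrite Hn, E; simpl; ring.
    + apply (isum_flip _ _ n _ _ H2). intros m Hm; rewrite Hne; auto. rewrite Hn, E; simpl; ring.
Qed.

Theorem mainTheorem19 :
  (forall x : pt, spectre sierpinski_carpet x <-> x = (0, 0)) /\
  ~ (exists v : nat -> pt,
       abs_convergent v /\
       forall p : pt, achievement_set v p <-> sierpinski_carpet p).
Proof.
  split.
  - intros x; split; [apply spectre_zero|].
    intros -> [y1 y2] Hy. left. unfold padd; simpl. rewrite !Rplus_0_r. auto.
  - intros [v [_ Hv]].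
    assert (Hz : forall n, v n = (0, 0)) by (intros n; apply spectre_zero, ach_spectre, Hv).
    assert (HS : sierpinski_carpet (INR 1 / 2, INR 0 / 2)).
    { apply (SC_mk ones zeros); try (intros i; unfold ones, zeros; lia); apply Dg_const. }
    apply Hv in HS. destruct HS as [eps [H1 _]]. simpl in H1.
    assert (H0 : infinite_sum (fun m => if eps m then fst (v m) else 0) 0).
    { apply (isum_ext _ _ _ _ (Dg_const 0)).
      - intros i. rewrite Hz. destruct (eps i); simpl; field; apply pow_nonzero; lra.
      - simpl; field. }
    pose proof (UL_sequence _ _ _ H1 H0). simpl in H. lra.
Qed.
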